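(* Let $k$ be an algebraically closed field, $Y\subseteq k^n$ an algebraic set with radical ideal $\mathfrak a=I(Y)\subseteq P=k[X_1,\ldots,X_n]$, coordinate ring $R=P/\mathfrak a$, and $x=(x_1,\ldots,x_n)$ the coordinate functions (images of $X_i$) in $R$, regarded as acting on the $R$-module $R$. Then $\sigma_{\mathrm p}(x,R)$ equals the set $Y_{is}$ of isolated points of $Y$. If $q=(q_1,\ldots,q_m)$ are polynomials in $P$ such that $R$ is integral over $k[q(x)]$ (so $q:Y\to k^m$ is a finite morphism), then $\sigma(q(x),R)=q(Y)$ and $\sigma_{\mathrm p}(q(x),R)=q(Y_{is})$.
   Context: For a commutative $k$-algebra $R$, an $R$-module $M$ and an $n$-tuple $y$ in $R$, the Koszul complex $\operatorname{Kos}(y,M)$ is $0\leftarrow M\leftarrow M\otimes_k\wedge^1k^n\leftarrow\cdots\leftarrow M\otimes_k\wedge^nk^n\leftarrow 0$ with differential $\partial(u\otimes e_{i_1}\wedge\cdots\wedge e_{i_p})=\sum_{s=1}^p(-1)^{s+1}y_{i_s}u\otimes e_{i_1}\wedge\cdots\wedge\widehat{e_{i_s}}\wedge\cdots\wedge e_{i_p}$, with homology $H_p(y,M)$. For $a\in k^n$, $y-a=(y_1-a_1,\ldots,y_n-a_n)$. Taylor spectrum $\sigma(y,M)$: the set of $a\in k^n$ with $\operatorname{Kos}(y-a,M)$ not exact. Point spectrum $\sigma_{\mathrm p}(y,M)$: the set of $a\in k^n$ with $H_n(y-a,M)\neq0$ (joint eigenvalues). *)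

(* Defs.v *)
From HB Require Import structures.
From mathcomp Require Import all_boot all_order all_algebra.
From mathcomp Require Import mpoly.
Set Implicit Arguments. Unset Strict Implicit. Unset Printing Implicit Defensive.
Import Order.TTheory GRing.Theory.
Local Open Scope ring_scope.

(* A chain of Kos(y, M) is a function c : {set 'I_m} -> M, c S being the
   coefficient of e_S = e_{i_1} /\ ... /\ e_{i_p} (i_1 < ... < i_p, S = {i_1..i_p}).
   Differential: d(u e_S) = sum_{s} (-1)^{s+1} y_{i_s} u e_{S \ i_s}, so the
   coefficient of e_T in d c is  sum_{i \notin T} (-1)^{#{j in T | j < i}} y_i c(i |: T). *)
Definition kos_d (P : comPzRingType) (m : nat) (y : 'I_m -> P)
    (c : {set 'I_m} -> P) : {set 'I_m} -> P :=
  fun T => \sum_(i < m | i \notin T)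
             (-1) ^+ #|[set j in T | (j < i)%N]| * y i * c (i |: T).

(* The module M = P/I is represented by P, equality in M being congruence mod
   the ideal I (given by its membership predicate).  A chain of degree p is a
   chain supported on the p-element subsets. *)
Definition deg_chain (P : comPzRingType) (m p : nat) (c : {set 'I_m} -> P) : Prop :=
  forall S : {set 'I_m}, #|S| <> p -> c S = 0.

Definition kos_homology_nonzero (P : comPzRingType) (I : P -> Prop) (m : nat)
    (y : 'I_m -> P) (p : nat) : Prop :=
  exists c : {set 'I_m} -> P,
    [/\ deg_chain p c,
        (forall T, I (kos_d y c T)) &
        ~ exists d : {set 'I_m} -> P,
            deg_chain p.+1 d /\ forall S, I (c S - kos_d y d S)].

Definition kos_not_exact (P : comPzRingType) (I : P -> Prop) (m : nat)
    (y : 'I_m -> P) : Prop :=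
  exists p : nat, kos_homology_nonzero I y p.

Section Geom.
Variables (k : fieldType) (n : nat).

Definition algebraic_set (Z : ('I_n -> k) -> Prop) : Prop :=
  exists F : {mpoly k[n]} -> Prop,
    forall z, Z z <-> (forall f, F f -> f.@[z] = 0).

Definition vanishing_ideal (Y : ('I_n -> k) -> Prop) : {mpoly k[n]} -> Prop :=
  fun f => forall z, Y z -> f.@[z] = 0.

(* isolated point of Y (for the Zariski topology): {y} is open in Y,
   i.e. Y \ {y} is closed in Y (equivalently in k^n, Y being closed). *)
Definition isolated_point (Y : ('I_n -> k) -> Prop) (y : 'I_n -> k) : Prop :=
  Y y /\ algebraic_set (fun z => Y z /\ z <> y).
End Geom.

Definition taylor_spectrum (k : fieldType) (n m : nat) (I : {mpoly k[n]} -> Prop)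
    (y : 'I_m -> {mpoly k[n]}) (a : 'I_m -> k) : Prop :=
  kos_not_exact I (fun i => y i - (a i)%:MP).

Definition point_spectrum (k : fieldType) (n m : nat) (I : {mpoly k[n]} -> Prop)
    (y : 'I_m -> {mpoly k[n]}) (a : 'I_m -> k) : Prop :=
  kos_homology_nonzero I (fun i => y i - (a i)%:MP) m.

Definition integral_over_q (k : fieldType) (n m : nat) (I : {mpoly k[n]} -> Prop)
    (q : 'I_m -> {mpoly k[n]}) : Prop :=
  forall r : {mpoly k[n]}, exists d : nat, exists c : 'I_d -> {mpoly k[m]},
    I (r ^+ d + \sum_(i < d) (c i \mPo [tuple q j | j < m]) * r ^+ i).

Definition poly_image (k : fieldType) (n m : nat) (q : 'I_m -> {mpoly k[n]})
    (Z : ('I_n -> k) -> Prop) (w : 'I_m -> k) : Prop :=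
  exists2 y, Z y & w = (fun j => (q j).@[y]).

(* Main.v *)
From Stdlib Require Import Classical FunctionalExtensionality.
Require Import Defs.
From HB Require Import structures.
From mathcomp Require Import all_boot all_order all_algebra.
From mathcomp Require Import mpoly.
From mathcomp Require Import zify ring.
Import GRing.Theory.
Local Open Scope ring_scope.

Module Helpers.
Set Implicit Arguments. Unset Strict Implicit. Unset Printing Implicit Defensive.

Section Kos.
Variables (P : comPzRingType) (m : nat).
Implicit Types (T S : {set 'I_m}).

Definition sgn T (i : 'I_m) : P := (-1) ^+ #|[set j in T | (j < i)%N]|.

Definition kos_h (g : 'I_m -> P) (c : {set 'I_m} -> P) S :=
  \sum_(i < m | i \in S) sgn S i * g i * c (S :\ i).

Lemma sgnU1 T i : i \notin T -> sgn (i |: T) i = sgn T i.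
Proof.
move=> iT; rewrite /sgn; congr (_ ^+ _); apply: eq_card => j.
rewrite !inE; case: eqP => //= ->; by rewrite ltnn andbF.
Qed.

Lemma sgnD1 T l : sgn (T :\ l) l = sgn T l.
Proof.
rewrite /sgn; congr (_ ^+ _); apply: eq_card => j.
rewrite !inE; case: eqP => //= ->; by rewrite ltnn /= andbF.
Qed.

Lemma setU1D1 (i l : 'I_m) T : l != i -> (i |: T) :\ l = i |: (T :\ l).
Proof.
move=> li; apply/setP=> j; rewrite !inE; case: (eqVneq j i) => [->|] //=.
by rewrite eq_sym li.
Qed.

Lemma sgn_sq T i : sgn T i * sgn T i = 1.
Proof. by rewrite /sgn -exprD addnn -mul2n exprM sqrrN !expr1n. Qed.

Lemma sgn_cross T i l : i \notin T -> l \in T ->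
  sgn T i * sgn (i |: T) l = - (sgn T l * sgn (T :\ l) i).
Proof.
move=> iT lT.
have il : i != l by apply: contraNneq iT => ->.
have E1 : #|[set j in i |: T | (j < l)%N]| = ((i < l)%N + #|[set j in T | (j < l)%N]|)%N.
  case: (ltnP i l) => h.
    rewrite (_ : [set j in i |: T | (j < l)%N] = i |: [set j in T | (j < l)%N]).
      by rewrite cardsU1 inE (negbTE iT).
    by apply/setP=> j; rewrite !inE; case: eqP => // ->; rewrite h.
  rewrite add0n; apply: eq_card => j; rewrite !inE; case: eqP => //= ->.
  by rewrite ltnNge h andbF.
have E2 : #|[set j in T | (j < i)%N]| = ((l < i)%N + #|[set j in T :\ l | (j < i)%N]|)%N.
  case: (ltnP l i) => h.
    rewrite (_ : [set j in T | (j < i)%N] = l |: [set j in T :\ l | (j < i)%N]).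
      by rewrite cardsU1 !inE eqxx.
    apply/setP=> j; rewrite !inE; case: eqP => [->|] //=; by rewrite lT h.
  rewrite add0n; apply: eq_card => j; rewrite !inE; case: eqP => //= ->.
  by rewrite lT ltnNge h.
have NS : forall e, - ((-1) ^+ e : P) = (-1) ^+ e.+1 by move=> e; rewrite exprS mulN1r.
rewrite /sgn E1 E2 -!exprD NS; congr (_ ^+ _).
case: (ltngtP i l) => h /=.
- lia.
- lia.
- by move: il; rewrite -(inj_eq val_inj) /= h eqxx.
Qed.

Lemma kos_homotopy (y g : 'I_m -> P) (c : {set 'I_m} -> P) T :
  kos_d y (kos_h g c) T + kos_h g (kos_d y c) T = (\sum_i y i * g i) * c T.
Proof.
rewrite /kos_d /kos_h.
have A : forall i, i \notin T ->
  sgn T i * y i * (\sum_(l < m | l \in i |: T) sgn (i |: T) l * g l * c ((i |: T) :\ l))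
  = y i * g i * c T + \sum_(l < m | l \in T) sgn T i * sgn (i |: T) l * y i * g l * c (i |: (T :\ l)).
  move=> i iT; rewrite (bigD1 i) ?setU11 //= mulrDr; congr (_ + _).
    rewrite sgnU1 // setU1K //.
    by rewrite -[RHS]mul1r -(sgn_sq T i); ring.
  rewrite mulr_sumr /=; apply: eq_big => l.
    by rewrite in_setU1; case: eqP => [->|] /=; rewrite ?(negbTE iT) ?andbT ?andbF.
  move=> /andP [lT li]; rewrite setU1D1 //.
  by ring.
have B : forall l, l \in T ->
  sgn T l * g l * (\sum_(i < m | i \notin T :\ l) sgn (T :\ l) i * y i * c (i |: (T :\ l)))
  = y l * g l * c T + \sum_(i < m | i \notin T) sgn T l * sgn (T :\ l) i * y i * g l * c (i |: (T :\ l)).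
  move=> l lT; rewrite (bigD1 l) ?setD11 //= mulrDr; congr (_ + _).
    rewrite sgnD1 setD1K //.
    by rewrite -[RHS]mul1r -(sgn_sq T l); ring.
  rewrite mulr_sumr /=; apply: eq_big => i.
    by rewrite in_setD1; case: eqP => [->|] /=; rewrite ?lT ?andbT ?andbF.
  by move=> _; ring.
rewrite (eq_bigr _ A) (eq_bigr _ B) !big_split /=.
rewrite addrACA.
rewrite [X in _ + X = _](_ : _ = 0) ?addr0.
  rewrite (bigID (fun i => i \in T) predT) /= mulrDl !mulr_suml addrC.
  by congr (_ + _); apply: eq_bigr => i _; rewrite ?mulrA.
rewrite (exchange_big_dep (fun j => j \in T)) //=.
rewrite -big_split /= big1 // => l lT.
rewrite (eq_bigl (fun i => i \notin T)) => [|i]; last by rewrite lT andbT.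
rewrite -big_split /= big1 // => i iT.
by rewrite sgn_cross // !mulNr addrC subrr.
Qed.
End Kos.
Arguments sgn {P m} T i.

Section Ideal.
Variables (R : comRingType) (n : nat).
Implicit Types (K : {mpoly R[n]} -> Prop) (f g : {mpoly R[n]}).

Definition is_ideal K :=
  [/\ K 0, (forall f g, K f -> K g -> K (f + g)) & (forall a f, K f -> K (a * f))].

Lemma idealM K a f : is_ideal K -> K f -> K (a * f).
Proof. by case=> _ _ h Kf; apply: h. Qed.
Lemma idealMr K a f : is_ideal K -> K f -> K (f * a).
Proof. by move=> KI Kf; rewrite mulrC; apply: idealM. Qed.
Lemma idealD K f g : is_ideal K -> K f -> K g -> K (f + g).
Proof. by case=> _ h _ Kf Kg; apply: h. Qed.
Lemma idealN K f : is_ideal K -> K f -> K (- f).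
Proof. move=> KI Kf; have -> : - f = (-1) * f by rewrite mulN1r.
exact: idealM. Qed.
Lemma idealB K f g : is_ideal K -> K f -> K g -> K (f - g).
Proof. by move=> KI Kf Kg; apply: idealD => //; apply: idealN. Qed.
Lemma ideal0 K : is_ideal K -> K 0.
Proof. by case. Qed.

Lemma cong_eval K (s : 'I_n -> R) : is_ideal K ->
  (forall j, K ('X_j - (s j)%:MP)) -> forall f, K (f - (f.@[s])%:MP).
Proof.
move=> KI Kg.
pose Rel (a : {mpoly R[n]}) (e : R) := K (a - e%:MP).
have RM : forall a b x y, Rel a x -> Rel b y -> Rel (a * b) (x * y).
  move=> a b x y ha hb; rewrite /Rel.
  have -> : a * b - (x * y)%:MP = (a - x%:MP) * b + x%:MP * (b - y%:MP).
    by rewrite mpolyCM; ring.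
  by apply: idealD => //; [apply: idealMr | apply: idealM].
have RX : forall a x k, Rel a x -> Rel (a ^+ k) (x ^+ k).
  move=> a x k ha; elim: k => [|k IH]; first by rewrite /Rel !expr0 mpolyC1 subrr; apply: ideal0.
  by rewrite !exprS; apply: RM.
elim/mpolyind => [|c m p _ _ IH]; first by rewrite meval0 mpolyC0 subrr; apply: ideal0.
rewrite mevalD mevalZ mpolyCD mpolyCM.
have -> : c *: 'X_[m] + p - (c%:MP * ('X_[m]).@[s]%:MP + (p.@[s])%:MP)
   = c%:MP * ('X_[m] - (('X_[m]).@[s])%:MP) + (p - (p.@[s])%:MP).
  by rewrite -mul_mpolyC; ring.
apply: idealD => //; apply: idealM => //.
rewrite mevalX mpolyXE_id.
apply: (big_ind2 Rel).
- by rewrite /Rel mpolyC1 subrr; apply: ideal0.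
- by move=> ? ? ? ? ha hb; apply: RM.
- move=> i _; apply: RX; exact: Kg.
Qed.

End Ideal.

Section Grid.
Variables (k : fieldType) (n : nat).
Implicit Types (K : {mpoly k[n]} -> Prop) (f g : {mpoly k[n]}).

Definition ext K (h : {mpoly k[n]}) : {mpoly k[n]} -> Prop :=
  fun f => exists a, K (f - a * h).

Lemma ext_ideal K h : is_ideal K -> is_ideal (ext K h).
Proof.
move=> KI; split.
- by exists 0; rewrite mul0r subrr; apply: ideal0.
- move=> f g [a ha] [b hb]; exists (a + b).
  have -> : f + g - (a + b) * h = (f - a * h) + (g - b * h) by ring.
  exact: idealD.
- move=> c f [a ha]; exists (c * a).
  have -> : c * f - (c * a) * h = c * (f - a * h) by ring.
  exact: idealM.
Qed.

Lemma ext_sub K h f : is_ideal K -> K f -> ext K h f.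
Proof. by move=> KI Kf; exists 0; rewrite mul0r subr0. Qed.

Lemma ext_h K h : is_ideal K -> ext K h h.
Proof. by move=> KI; exists 1; rewrite mul1r subrr; apply: ideal0. Qed.

Definition gsize (rs : 'I_n -> seq k) := (\sum_j size (rs j))%N.

Lemma gsize_upd (rs : 'I_n -> seq k) j (s : seq k) :
  (size s < size (rs j))%N ->
  (gsize (fun l => if l == j then s else rs l) < gsize rs)%N.
Proof.
move=> h; rewrite /gsize (bigD1 j) //= [X in (_ < X)%N](bigD1 j) //= eqxx.
rewrite (eq_bigr (fun i => size (rs i))) ?ltn_add2r // => i; by move/negbTE => ->.
Qed.

Lemma grid_step K rs :
  is_ideal K ->
  (forall s : 'I_n -> k, exists f, K f /\ f.@[s] != 0) ->
  (forall j, K (\prod_(r <- rs j) ('X_j - r%:MP))) ->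
  (forall K' rs', is_ideal K' ->
     (forall s : 'I_n -> k, exists f, K' f /\ f.@[s] != 0) ->
     (forall j, K' (\prod_(r <- rs' j) ('X_j - r%:MP))) ->
     (gsize rs' < gsize rs)%N -> K' 1) ->
  K 1.
Proof.
move=> KI Hs Hg IH.
case: (boolP [exists j, (1 < size (rs j))%N]).
  case/existsP=> j hj.
  case E: (rs j) hj => [|r rs'] //= hj.
  pose A : {mpoly k[n]} := 'X_j - r%:MP.
  pose B : {mpoly k[n]} := \prod_(r' <- rs') ('X_j - r'%:MP).
  have K1 : ext K A 1.
    apply: (IH _ (fun l => if l == j then [:: r] else rs l)).
    - exact: ext_ideal.
    - by move=> s; have [f [Kf hf]] := Hs s; exists f; split => //; apply: ext_sub.
    - move=> l; case: eqP => [->|_]; last by apply: ext_sub.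
      by rewrite big_seq1; apply: ext_h.
    - by apply: gsize_upd; rewrite E.
  have K2 : ext K B 1.
    apply: (IH _ (fun l => if l == j then rs' else rs l)).
    - exact: ext_ideal.
    - by move=> s; have [f [Kf hf]] := Hs s; exists f; split => //; apply: ext_sub.
    - move=> l; case: eqP => [->|_]; last by apply: ext_sub.
      exact: ext_h.
    - by apply: gsize_upd; rewrite E.
  case: K1 => a Ka; case: K2 => b Kb.
  have -> : (1 : {mpoly k[n]}) = (1 - a * A) * 1 + (a * A) * (1 - b * B) + (a * b) * (A * B)
    by ring.
  apply: idealD => //; first apply: idealD => //.
  - exact: idealMr.
  - exact: idealM.
  - apply: idealM => //; have := Hg j; rewrite E big_cons //.
rewrite negb_exists => /forallP Hle.
case: (boolP [exists j, rs j == [::]]).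
  by case/existsP=> j /eqP E; have := Hg j; rewrite E big_nil.
rewrite negb_exists => /forallP Hne.
pose s j := head 0 (rs j).
have Es : forall j, rs j = [:: s j].
  move=> j; have := Hle j; have := Hne j; rewrite /s.
  by case: (rs j) => [|x [|y t]].
have [f [Kf hf]] := Hs s.
have Kc := cong_eval KI (fun j => ltac:(have := Hg j; rewrite Es big_seq1; exact)) f.
have Kv : K (f.@[s])%:MP.
  have -> : (f.@[s])%:MP = f - (f - (f.@[s])%:MP) by ring.
  exact: idealB.
have -> : (1 : {mpoly k[n]}) = ((f.@[s])^-1)%:MP * (f.@[s])%:MP.
  by rewrite -mpolyCM mulVf // mpolyC1.
exact: idealM.
Qed.

Lemma grid K rs :
  is_ideal K ->
  (forall s : 'I_n -> k, exists f, K f /\ f.@[s] != 0) ->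
  (forall j, K (\prod_(r <- rs j) ('X_j - r%:MP))) -> K 1.
Proof.
move: {2}(gsize rs) (leqnn (gsize rs)) => N.
elim/ltn_ind: N K rs => N IH K rs hN KI Hs Hg.
apply: (grid_step KI Hs Hg) => K' rs' KI' Hs' Hg' hlt.
by apply: (IH (gsize rs')) => //; apply: leq_trans hlt hN.
Qed.

End Grid.

Section Roots.
Variable (k : closedFieldType).

Lemma roots_exist d (a : 'I_d -> k) : exists rs : seq k,
  forall t, \prod_(r <- rs) (t - r) = t ^+ d + \sum_(i < d) a i * t ^+ i.
Proof.
pose b : nat -> k := fun i => if insub i is Some j then a j else 0.
pose P : {poly k} := 'X^d + \poly_(i < d) b i.
have lc : lead_coef P = 1.
  rewrite /P lead_coefDl ?lead_coefXn // size_polyXn ltnS; exact: size_poly.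
have [rs Ers] := closed_field_poly_normal P.
exists rs => t.
have E := congr1 (fun p => p.[t]) Ers; rewrite /= lc scale1r horner_prod in E.
rewrite (eq_bigr (fun r => ('X - r%:P).[t])); last by move=> r _; rewrite hornerXsubC.
rewrite -E /P hornerD hornerXn horner_poly; congr (_ + _).
by apply: eq_bigr => i _; rewrite /b valK.
Qed.
End Roots.

Section Main.
Variables (k : closedFieldType) (n : nat) (Y : ('I_n -> k) -> Prop).
Local Notation VI := (vanishing_ideal Y).
Local Notation mp := {mpoly k[n]}.

Lemma VI_ideal : is_ideal VI.
Proof.
split.
- by move=> z _; rewrite meval0.
- by move=> f g hf hg z Yz; rewrite mevalD hf ?hg ?addr0.
- by move=> a f hf z Yz; rewrite mevalM hf ?mulr0.
Qed.

Lemma ideal_sum (K : mp -> Prop) (I : finType) (P : pred I) (F : I -> mp) :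
  is_ideal K -> (forall i, P i -> K (F i)) -> K (\sum_(i | P i) F i).
Proof.
move=> KI h; apply: (big_ind K) => //; [exact: ideal0 | move=> x y; exact: idealD].
Qed.

Lemma card_setT_eq m (S : {set 'I_m}) : (S == setT) = (#|S| == m).
Proof.
rewrite eqEcard subsetT cardsT card_ord /=.
by have := max_card S; rewrite card_ord => h; rewrite eqn_leq h.
Qed.

Lemma ps_char m (y : 'I_m -> mp) :
  kos_homology_nonzero VI y m <-> exists u, ~ VI u /\ forall i, VI (y i * u).
Proof.
split.
- case=> c [degc cyc nb]; exists (c setT); split.
  + move=> hu; apply: nb; exists (fun _ => 0); split; first by [].
    move=> S; rewrite /kos_d big1 ?subr0 => [|i _]; last by rewrite mulr0.
    case: (eqVneq S setT) => [->|nS] //; rewrite degc; first exact: ideal0 VI_ideal.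
    by apply/eqP; rewrite -card_setT_eq.
  + move=> i; have := cyc (setT :\ i); rewrite /kos_d.
    rewrite (bigD1 i) ?inE ?eqxx //= big1 ?addr0 => [|l /andP [lT li]]; last first.
      by move: lT; rewrite !inE li.
    rewrite setD1K ?inE // => h.
    have -> : y i * c setT = sgn (setT :\ i) i * (sgn (setT :\ i) i * y i * c setT).
      by rewrite !mulrA sgn_sq mul1r.
    exact: idealM VI_ideal h.
- case=> u [nu hu].
  exists (fun S => if S == setT then u else 0); split.
  + by move=> S hS; rewrite card_setT_eq (negbTE (introN eqP hS)).
  + move=> T; rewrite /kos_d; apply: ideal_sum VI_ideal _ => i _.
    case: ifP => _; last by rewrite mulr0; apply: ideal0 VI_ideal.
    rewrite -mulrA; exact: idealM VI_ideal (hu i).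
  + case=> d [degd hd]; apply: nu.
    have := hd setT; rewrite eqxx /kos_d big1 ?subr0 // => i _.
    rewrite degd ?mulr0 //; apply/eqP; rewrite neq_ltn; apply/orP; left.
    by rewrite ltnS; apply: leq_trans (max_card _) _; rewrite card_ord.
Qed.

Lemma exact_of_unit m (y g : 'I_m -> mp) :
  VI (1 - \sum_i y i * g i) -> ~ kos_not_exact VI y.
Proof.
move=> hu [p [c [degc cyc nb]]]; apply: nb; exists (kos_h g c); split.
- move=> S hS; rewrite /kos_h big1 // => i iS; rewrite degc ?mulr0 //.
  by move=> e; apply: hS; rewrite (cardsD1 i) iS e.
- move=> S.
  have -> : c S - kos_d y (kos_h g c) S
      = (1 - \sum_i y i * g i) * c S + kos_h g (kos_d y c) S.
    by rewrite mulrBl mul1r -(kos_homotopy y g c S); ring.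
  apply: (idealD VI_ideal).
  - by move=> z Yz; rewrite mevalM hu // mul0r.
  - rewrite /kos_h; apply: (ideal_sum VI_ideal) => i _.
    by move=> z Yz; rewrite mevalM (cyc _ z Yz) mulr0.
Qed.
End Main.

Section Main2.
Variables (k : closedFieldType) (n : nat) (Y : ('I_n -> k) -> Prop).
Local Notation VI := (vanishing_ideal Y).
Local Notation mp := {mpoly k[n]}.

Lemma nVI u : ~ VI u -> exists z, Y z /\ u.@[z] != 0.
Proof.
move=> h; apply: NNPP => h2; apply: h => z Yz.
by apply: NNPP => ne; apply: h2; exists z; split => //; apply/eqP.
Qed.

Lemma iso_to_u z0 : isolated_point Y z0 ->
  exists u : mp, u.@[z0] != 0 /\ forall z, Y z -> z <> z0 -> u.@[z] = 0.
Proof.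
case=> Yz0 [F hF].
have : ~ (forall f, F f -> f.@[z0] = 0) by move/hF => [].
move/not_all_ex_not => [f hf]; exists f; split.
  by apply/eqP => e; apply: hf => _.
move=> z Yz nz; by apply: (proj1 (hF z) (conj Yz nz)); apply: NNPP => h; apply: hf.
Qed.

Lemma ps_of_iso m (y : 'I_m -> mp) z0 : isolated_point Y z0 ->
  (forall i, (y i).@[z0] = 0) -> exists u, ~ VI u /\ forall i, VI (y i * u).
Proof.
move=> iso hy; have [u [uz0 hu]] := iso_to_u iso; exists u; split.
  by move=> h; move: uz0; rewrite (h z0 (proj1 iso)) eqxx.
move=> i z Yz; rewrite mevalM; case: (classic (z = z0)) => [->|nz].
  by rewrite hy mul0r.
by rewrite hu ?mulr0.
Qed.

Lemma iso_of_u (F : mp -> Prop) u z0 (rs : 'I_n -> seq k) :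
  (forall z, Y z <-> (forall f, F f -> f.@[z] = 0)) ->
  Y z0 -> u.@[z0] != 0 ->
  (forall z, Y z -> u.@[z] != 0 -> forall j, z j \in rs j) ->
  isolated_point Y z0.
Proof.
move=> hF Yz0 uz0 hrs; split => //.
pose g : mp := u * \prod_j \prod_(r <- rs j | r != z0 j) ('X_j - r%:MP).
have gE : forall z, g.@[z] = u.@[z] * \prod_j \prod_(r <- rs j | r != z0 j) (z j - r).
  move=> z; rewrite mevalM rmorph_prod; congr (_ * _); apply: eq_bigr => j _.
  rewrite rmorph_prod; apply: eq_bigr => r _; by rewrite rmorphB /= mevalXU mevalC.
exists (fun f => F f \/ f = g) => z; split.
- case=> Yz nz f [Ff|->]; first exact: (proj1 (hF z) Yz).
  rewrite gE; case: (eqVneq u.@[z] 0) => [->|uz]; first by rewrite mul0r.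
  have [j hj] : exists j, z j <> z0 j.
    apply: NNPP => h; apply: nz; apply: functional_extensionality => j.
    by apply: NNPP => h2; apply: h; exists j.
  apply/eqP; rewrite mulf_eq0; apply/orP; right.
  apply/prodf_eq0; exists j => //.
  rewrite prodf_seq_eq0; apply/hasP; exists (z j); first exact: hrs.
  by rewrite subrr eqxx andbT; apply/eqP.
- move=> h; have Yz : Y z by apply/hF => f Ff; apply: h; left.
  split => // ez; have := h g (or_intror erefl); rewrite ez gE.
  apply/eqP; rewrite mulf_neq0 //; apply/prodf_neq0 => j _.
  rewrite prodf_seq_eq0; apply/hasP => [[r _ /andP [rz /eqP e]]].
  by move: rz; rewrite -(subr0 (z0 j)) -e opprB addrC subrK eqxx.
Qed.

Definition Kq m (q : 'I_m -> mp) (b : 'I_m -> k) (f : mp) :=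
  exists g : 'I_m -> mp, VI (f - \sum_i (q i - (b i)%:MP) * g i).

Lemma Kq_ideal m q b : is_ideal (@Kq m q b).
Proof.
split.
- exists (fun _ => 0) => z Yz; rewrite big1 => [|i _]; last by rewrite mulr0.
  by rewrite subr0 meval0.
- move=> f g [a ha] [c hc]; exists (fun i => a i + c i).
  have -> : f + g - \sum_i (q i - (b i)%:MP) * (a i + c i)
     = (f - \sum_i (q i - (b i)%:MP) * a i) + (g - \sum_i (q i - (b i)%:MP) * c i).
    rewrite (eq_bigr (fun i => (q i - (b i)%:MP) * a i + (q i - (b i)%:MP) * c i)).
      by rewrite big_split /=; ring.
    by move=> i _; rewrite mulrDr.
  by move=> z Yz; rewrite mevalD ha ?hc ?addr0.
- move=> a f [c hc]; exists (fun i => a * c i).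
  have -> : a * f - \sum_i (q i - (b i)%:MP) * (a * c i)
          = a * (f - \sum_i (q i - (b i)%:MP) * c i).
    by rewrite mulrBr mulr_sumr; congr (_ - _); apply: eq_bigr => i _; ring.
  by move=> z Yz; rewrite mevalM hc ?mulr0.
Qed.


Lemma Kq_ext m q b (f f' : mp) : @Kq m q b f -> (forall z, f.@[z] = f'.@[z]) -> Kq q b f'.
Proof. by case=> g hg e; exists g => z Yz; rewrite mevalB -e -mevalB; apply: hg. Qed.

Lemma Kq_gen m q b l : @Kq m q b (q l - (b l)%:MP).
Proof.
exists (fun i => if i == l then 1 else 0) => z Yz.
rewrite (bigD1 l) //= eqxx mulr1 big1 ?addr0 ?subrr ?meval0 // => i /negbTE ->.
by rewrite mulr0.
Qed.

Lemma VI_Kq m q b f : VI f -> @Kq m q b f.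
Proof.
move=> h; exists (fun _ => 0) => z Yz; rewrite big1 => [|i _]; last by rewrite mulr0.
by rewrite subr0; apply: h.
Qed.

Lemma comp_eval m (q : 'I_m -> mp) (c : {mpoly k[m]}) z :
  (c \mPo [tuple q j | j < m]).@[z] = c.@[fun l => (q l).@[z]].
Proof. by rewrite comp_mpoly_meval; apply: meval_eq => l; rewrite tnth_mktuple. Qed.

Lemma Kq_comp m q b (c : {mpoly k[m]}) :
  @Kq m q b ((c \mPo [tuple q j | j < m]) - (c.@[b])%:MP).
Proof.
pose t := [tuple q j | j < m].
pose K' (h : {mpoly k[m]}) := Kq q b (h \mPo t).
have KI : is_ideal K'.
  split.
  - by rewrite /K' comp_mpoly0; apply: ideal0; apply: Kq_ideal.
  - move=> f g hf hg; rewrite /K' comp_mpolyD; exact: idealD (Kq_ideal _ _) hf hg.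
  - move=> a f hf; rewrite /K' rmorphM; exact: idealM (Kq_ideal _ _) hf.
have := @cong_eval _ _ K' b KI _ c; rewrite /K' comp_mpolyB comp_mpolyC; apply.
move=> l; rewrite /K' comp_mpolyB comp_mpolyXU comp_mpolyC -(tnth_nth 0) tnth_mktuple.
exact: Kq_gen.
Qed.

Lemma int_roots m (q : 'I_m -> mp) (b : 'I_m -> k) j :
  integral_over_q VI q ->
  exists rs : seq k,
    (forall z, Y z -> (forall i, (q i).@[z] = b i) -> z j \in rs) /\
    Kq q b (\prod_(r <- rs) ('X_j - r%:MP)).
Proof.
move=> Hint; have [d [c hc]] := Hint 'X_j.
have [rs hrs] := roots_exist (fun i => (c i).@[b]).
exists rs; split.
  move=> z Yz hq; have := hc z Yz.
  rewrite mevalD rmorphXn /= mevalXU rmorph_sum /=.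
  rewrite (eq_bigr (fun i => (c i).@[b] * z j ^+ i)); last first.
    move=> i _; rewrite rmorphM /= rmorphXn /= mevalXU comp_eval; congr (_ * _).
    exact: meval_eq.
  rewrite -hrs => /eqP; rewrite prodf_seq_eq0 => /hasP [r rin /andP [_ /eqP e]].
  by move/subr0_eq: e => ->.
pose Q : mp := 'X_j ^+ d + \sum_(i < d) ((c i).@[b])%:MP * 'X_j ^+ i.
apply: (@Kq_ext _ _ _ Q); last first.
  move=> z; rewrite rmorph_prod /= (eq_bigr (fun r => z j - r)); last first.
    by move=> r _; rewrite rmorphB /= mevalXU mevalC.
  rewrite hrs /Q mevalD rmorphXn /= mevalXU rmorph_sum /=; congr (_ + _).
  by apply: eq_bigr => i _; rewrite rmorphM /= rmorphXn /= mevalXU mevalC.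
have -> : Q = ('X_j ^+ d + \sum_(i < d) (c i \mPo [tuple q j | j < m]) * 'X_j ^+ i)
    - \sum_(i < d) ((c i \mPo [tuple q j | j < m]) - ((c i).@[b])%:MP) * 'X_j ^+ i.
  rewrite [X in _ = _ - X](eq_bigr (fun i : 'I_d => (c i \mPo [tuple q j | j < m]) * 'X_j ^+ i
       - ((c i).@[b])%:MP * 'X_j ^+ i)); last by move=> i _; rewrite mulrBl.
  by rewrite sumrB /Q; ring.
apply: idealB; first exact: Kq_ideal.
  by apply: VI_Kq; apply: hc.
apply: ideal_sum; first exact: Kq_ideal.
move=> i _; rewrite mulrC; exact: idealM (Kq_ideal _ _) (Kq_comp _ _ _).
Qed.

End Main2.

End Helpers.
Import Helpers.

Theorem corollary3p9 (k : closedFieldType) (n : nat) (Y : ('I_n -> k) -> Prop) :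
  algebraic_set Y ->
  (forall a : 'I_n -> k,
     point_spectrum (vanishing_ideal Y) (fun i : 'I_n => 'X_i) a
     <-> isolated_point Y a) /\
  (forall (m : nat) (q : 'I_m -> {mpoly k[n]}),
     integral_over_q (vanishing_ideal Y) q ->
     (forall b : 'I_m -> k,
        taylor_spectrum (vanishing_ideal Y) q b <-> poly_image q Y b) /\
     (forall b : 'I_m -> k,
        point_spectrum (vanishing_ideal Y) q b
        <-> poly_image q (isolated_point Y) b)).
Proof.
move=> [F hF]; split.
  move=> a; rewrite /point_spectrum; apply: (iff_trans (ps_char _ _)); split.
    case=> u [nu hu]; have [z0 [Yz0 uz0]] := nVI nu.
    have zr : forall z, Y z -> u.@[z] != 0 -> forall j, z j = a j.
      move=> z Yz uz j; have := hu j z Yz.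
      rewrite mevalM mevalB mevalXU mevalC => /eqP; rewrite mulf_eq0 (negbTE uz) orbF.
      by move/eqP/subr0_eq.
    have e : z0 = a by apply: functional_extensionality; apply: zr.
    have := iso_of_u (rs := fun j => [:: a j]) hF Yz0 uz0; rewrite e; apply.
    by move=> z Yz uz j; rewrite inE (zr z Yz uz j).
  move=> iso; apply: (ps_of_iso iso) => i; by rewrite mevalB mevalXU mevalC subrr.
move=> m q Hint; split.
  move=> b; split.
    move=> hT; apply: NNPP => nim.
    have [rs hrs] := fin_all_exists (fun j => int_roots b j Hint).
    have K1 : Kq Y q b 1.
      apply: (grid (Kq_ideal _ _ _) _ (fun j => (hrs j).2)) => s.
      case: (classic (Y s)) => Ys.
        have [i hi] : exists i, (q i).@[s] <> b i.
          apply: NNPP => h; apply: nim; exists s => //.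
          apply: functional_extensionality => j; apply: NNPP => h2; apply: h.
          by exists j => e; apply: h2.
        exists (q i - (b i)%:MP); split; first exact: Kq_gen.
        by rewrite mevalB mevalC subr_eq0; apply/eqP.
      have : ~ (forall f, F f -> f.@[s] = 0) by move/hF.
      move/not_all_ex_not => [f hf]; have [Ff fs] := imply_to_and _ _ hf.
      exists f; split; last by apply/eqP.
      by apply: VI_Kq => z Yz; apply: (proj1 (hF z) Yz).
    case: K1 => g hg; exact: (exact_of_unit hg hT).
  case=> y0 Yy0 ->; exists 0%N; exists (fun S => if S == set0 then 1 else 0); split.
  - move=> S hS; rewrite (_ : (S == set0) = false) //; apply/negbTE.
    by rewrite -cards_eq0; apply/eqP.
  - move=> T z _; rewrite /kos_d rmorph_sum big1 // => i _.
    have -> : (i |: T == set0) = false.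
      by apply/negbTE/set0Pn; exists i; rewrite setU11.
    by rewrite mulr0 rmorph0.
  - case=> d [_ hd]; have := hd set0 y0 Yy0; rewrite eqxx mevalB meval1 /kos_d rmorph_sum.
    rewrite big1 => [|i _]; last by rewrite !rmorphM rmorphB /= mevalC subrr mulr0 mul0r.
    by rewrite subr0 => /eqP; rewrite oner_eq0.
move=> b; rewrite /point_spectrum; apply: (iff_trans (ps_char _ _)); split.
  case=> u [nu hu]; have [z0 [Yz0 uz0]] := nVI nu.
  have hq : forall z, Y z -> u.@[z] != 0 -> forall i, (q i).@[z] = b i.
    move=> z Yz uz i; have := hu i z Yz.
    rewrite mevalM mevalB mevalC => /eqP; rewrite mulf_eq0 (negbTE uz) orbF.
    by move/eqP/subr0_eq.
  have [rs hrs] := fin_all_exists (fun j => int_roots b j Hint).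
  exists z0; last by apply: functional_extensionality => j; rewrite hq.
  apply: (iso_of_u (rs := rs) hF Yz0 uz0) => z Yz uz j.
  exact: (hrs j).1 z Yz (hq z Yz uz).
case=> z0 iso ->; apply: (ps_of_iso iso) => i; by rewrite mevalB mevalC subrr.
Qed.
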